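(* Let $G\subset\mathfrak{S}_6$ be a subgroup isomorphic to $\mathfrak{S}_5$ that acts transitively on $\{0,1,\ldots,5\}$ (a non-standard $\mathfrak{S}_5$), acting on $\mathbb{P}^4=\{x_0+\cdots+x_5=0\}\subset\mathbb{P}^5$ by permuting the coordinates. Let $\Sigma_{10}\subset\mathbb{P}^4$ be the $\mathfrak{S}_6$-orbit of the point $[-1:-1:-1:1:1:1]$. Let $X$ be a $G$-invariant quartic threefold in $\mathbb{P}^4$ that contains $\Sigma_{10}$. Then $X=X_{\frac{1}{6}}$.
   Context: For $t\in\mathbb{C}$, $X_t\subset\mathbb{P}^4=\{x_0+\cdots+x_5=0\}\subset\mathbb{P}^5$ denotes the quartic threefold given by $\sum_{i=0}^5x_i^4=t\big(\sum_{i=0}^5x_i^2\big)^2$. *)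

(* Defs.v *)
From HB Require Import structures.
From mathcomp Require Import all_boot all_order all_algebra all_fingroup.
From mathcomp Require Import complex.
From mathcomp Require Import Rstruct.
From mathcomp Require Import mpoly.
From Stdlib Require Rdefinitions.

Set Implicit Arguments. Unset Strict Implicit. Unset Printing Implicit Defensive.
Import Order.TTheory GRing.Theory Num.Theory.
Local Open Scope ring_scope.

Notation CC := (complex Rdefinitions.R).

(* Points of C^6 (affine cones over points of P^5). *)
Definition pt := 'I_6 -> CC.

Definition in_P4 (x : pt) : Prop := \sum_(i < 6) x i = 0.

Definition Ft (t : CC) (x : pt) : CC :=
  \sum_(i < 6) x i ^+ 4 - t * (\sum_(i < 6) x i ^+ 2) ^+ 2.

Definition permpt (g : {perm 'I_6}) (x : pt) : pt := fun i => x (g i).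

Definition v0 : pt := fun i => if (nat_of_ord i < 3)%N then -1 else 1.

(* A quartic threefold X in P^4 is given by a homogeneous quartic form f in
   x_0..x_5 which does not vanish identically on P^4; X = {f = 0} in P^4,
   and f is determined by X up to a nonzero scalar modulo (x_0+...+x_5). *)
Definition quartic_threefold (f : {mpoly CC[6]}) : Prop :=
  f \is 4.-homog /\ exists x : pt, in_P4 x /\ f.@[x] != 0.

(* X = {f = 0} is G-invariant: each g in G maps the hypersurface to itself,
   i.e. f o g agrees with f on P^4 up to a nonzero scalar. *)
Definition invariant_under (G : {set {perm 'I_6}}) (f : {mpoly CC[6]}) : Prop :=
  forall g, g \in G -> exists2 c : CC, c != 0 &
     forall x : pt, in_P4 x -> f.@[permpt g x] = c * f.@[x].

Definition contains_Sigma10 (f : {mpoly CC[6]}) : Prop :=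
  forall s : {perm 'I_6}, f.@[permpt s v0] = 0.

Definition is_Xt (t : CC) (f : {mpoly CC[6]}) : Prop :=
  exists2 c : CC, c != 0 & forall x : pt, in_P4 x -> f.@[x] = c * Ft t x.

(* Main.v *)
Require Import Defs.
From HB Require Import structures.
From mathcomp Require Import all_boot all_order all_algebra all_fingroup.
From mathcomp Require Import complex.
From mathcomp Require Import Rstruct.
From mathcomp Require Import mpoly.
From mathcomp Require Import ring.
From mathcomp Require Import zify.
Local Open Scope ring_scope.
Import GRing.Theory Num.Theory.

Definition lcomp (s t : seq nat) : seq nat := [seq nth 0%N t x | x <- s].
Fixpoint lpow (s : seq nat) (k : nat) : seq nat :=
  if k is k'.+1 then lcomp (lpow s k') s else iota 0 (size s).

Definition tb {n} (p : {perm 'I_n}) : seq nat := [seq val (p i) | i <- enum 'I_n].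

Lemma size_tb n (p : {perm 'I_n}) : size (tb p) = n.
Proof. by rewrite size_map size_enum_ord. Qed.

Lemma nth_tb n (p : {perm 'I_n}) (i : 'I_n) : nth 0%N (tb p) i = val (p i).
Proof.
by rewrite (nth_map i) ?size_enum_ord // nth_ord_enum.
Qed.

Lemma tb_inj n (p q : {perm 'I_n}) : tb p = tb q -> p = q.
Proof.
move=> E; apply/permP => i; apply: val_inj.
by rewrite -!nth_tb E.
Qed.

Lemma tb1 n : tb (1 : {perm 'I_n}) = iota 0 n.
Proof.
rewrite /tb -val_enum_ord; apply: eq_map => i; by rewrite perm1.
Qed.

Lemma tbM n (p q : {perm 'I_n}) : tb (p * q)%g = lcomp (tb p) (tb q).
Proof.
rewrite /lcomp /tb -map_comp; apply: eq_map => i /=.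
by rewrite permM -nth_tb.
Qed.

Lemma tbX n (p : {perm 'I_n}) k : tb (p ^+ k)%g = lpow (tb p) k.
Proof.
elim: k => [|k IH]; first by rewrite expg0 tb1 /= size_tb.
by rewrite expgSr tbM IH.
Qed.

Section MkPerm.
Variable n : nat.
Variable l : seq nat.
Hypothesis Hu : uniq l.
Hypothesis Hs : size l = n.+1.
Hypothesis Ha : all (fun k => k < n.+1)%N l.

Definition tfun (i : 'I_n.+1) : 'I_n.+1 := inord (nth 0%N l i).

Lemma tfun_val (i : 'I_n.+1) : val (tfun i) = nth 0%N l i.
Proof.
rewrite /tfun; apply: inordK.
have Hi : (i < size l)%N by rewrite Hs.
exact: (allP Ha _ (mem_nth 0%N Hi)).
Qed.

Lemma tfun_inj : injective tfun.
Proof.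
move=> i j /(congr1 val); rewrite !tfun_val => /eqP.
rewrite nth_uniq ?Hs // => /eqP E; exact: val_inj.
Qed.

Definition mkperm : {perm 'I_n.+1} := perm tfun_inj.

Lemma tb_mkperm : tb mkperm = l.
Proof.
apply: (@eq_from_nth _ 0%N); first by rewrite size_tb Hs.
move=> i; rewrite size_tb => Hi.
have -> : i = nat_of_ord (Ordinal Hi) by [].
by rewrite nth_tb permE tfun_val.
Qed.
End MkPerm.

Inductive wd2 := V1 | V2 | VM of wd2 & wd2.
Fixpoint ev2 {gT : finGroupType} (p q : gT) (w : wd2) : gT :=
  match w with V1 => p | V2 => q | VM u v => (ev2 p q u * ev2 p q v)%g end.
Fixpoint lev2 (p q : seq nat) (w : wd2) : seq nat :=
  match w with V1 => p | V2 => q | VM u v => lcomp (lev2 p q u) (lev2 p q v) end.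

Inductive wd := WA | WC | WM of wd & wd.
Fixpoint ev {gT : finGroupType} (p q : gT) (w : wd) : gT :=
  match w with WA => p | WC => (q * p * q)%g | WM u v => (ev p q u * ev p q v)%g end.
Fixpoint lev (p q : seq nat) (w : wd) : seq nat :=
  match w with WA => p | WC => lcomp (lcomp q p) q | WM u v => lcomp (lev p q u) (lev p q v) end.

Lemma tb_ev2 n (p q : {perm 'I_n}) w : tb (ev2 p q w) = lev2 (tb p) (tb q) w.
Proof. by elim: w => //= u IHu v IHv; rewrite tbM IHu IHv. Qed.

Lemma tb_ev n (p q : {perm 'I_n}) w : tb (ev p q w) = lev (tb p) (tb q) w.
Proof. by elim: w => //= [|u IHu v IHv]; rewrite !tbM ?IHu ?IHv. Qed.

Definition wfor (i j : nat) : wd2 :=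
  match i, j with
  | 0, 1 => V2
  | 0, 2 => (VM (VM (VM (VM (VM (VM V1 V2) V1) V2) V1) V1) V2)
  | 0, 3 => (VM (VM (VM (VM (VM (VM V1 V2) V1) V1) V2) V1) V2)
  | 0, 4 => (VM (VM (VM (VM (VM V1 V2) V1) V1) V1) V1)
  | 1, 0 => V2
  | 1, 2 => (VM (VM (VM (VM (VM V1 V1) V1) V1) V2) V1)
  | 1, 3 => (VM (VM (VM (VM (VM (VM V2 V1) V2) V1) V1) V2) V1)
  | 1, 4 => (VM (VM (VM (VM (VM (VM V2 V1) V1) V2) V1) V2) V1)
  | 2, 0 => (VM (VM (VM (VM (VM (VM V1 V2) V1) V2) V1) V1) V2)
  | 2, 1 => (VM (VM (VM (VM (VM V1 V1) V1) V1) V2) V1)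
  | 2, 3 => (VM (VM (VM (VM (VM V1 V1) V1) V2) V1) V1)
  | 2, 4 => (VM (VM (VM (VM (VM (VM (VM (VM V1 V2) V1) V1) V2) V1) V1) V2) V1)
  | 3, 0 => (VM (VM (VM (VM (VM (VM V1 V2) V1) V1) V2) V1) V2)
  | 3, 1 => (VM (VM (VM (VM (VM (VM V2 V1) V2) V1) V1) V2) V1)
  | 3, 2 => (VM (VM (VM (VM (VM V1 V1) V1) V2) V1) V1)
  | 3, 4 => (VM (VM (VM (VM (VM V1 V1) V2) V1) V1) V1)
  | 4, 0 => (VM (VM (VM (VM (VM V1 V2) V1) V1) V1) V1)
  | 4, 1 => (VM (VM (VM (VM (VM (VM V2 V1) V1) V2) V1) V2) V1)
  | 4, 2 => (VM (VM (VM (VM (VM (VM (VM (VM V1 V2) V1) V1) V2) V1) V1) V2) V1)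
  | 4, 3 => (VM (VM (VM (VM (VM V1 V1) V2) V1) V1) V1)
  | _, _ => V1
  end.
Definition WT : seq (wd * seq nat) := [::
  ((WM (WM (WM (WM WA WA) WA) WA) WA), [:: 0; 1; 2; 3; 4; 5]);
  ((WM (WM (WM (WM WA WA) WC) WC) WC), [:: 0; 1; 4; 5; 2; 3]);
  ((WM (WM (WM (WM WC WA) WA) WA) WC), [:: 0; 2; 1; 3; 5; 4]);
  ((WM (WM WC WA) WA), [:: 0; 2; 5; 4; 1; 3]);
  ((WM (WM (WM (WM (WM WC WA) WC) WC) WC) WA), [:: 0; 3; 4; 2; 5; 1]);
  ((WM (WM (WM (WM WA WC) WC) WA) WA), [:: 0; 3; 5; 1; 4; 2]);
  ((WM (WM (WM (WM WC WA) WC) WC) WA), [:: 0; 4; 1; 5; 3; 2]);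
  ((WM (WM (WM (WM (WM WC WC) WA) WA) WC) WA), [:: 0; 4; 3; 2; 1; 5]);
  ((WM WA WC), [:: 0; 5; 2; 4; 3; 1]);
  ((WM (WM (WM (WM (WM WC WA) WA) WC) WA) WA), [:: 0; 5; 3; 1; 2; 4]);
  ((WM (WM (WM (WM (WM WC WA) WC) WC) WA) WA), [:: 1; 0; 2; 5; 4; 3]);
  ((WM (WM (WM (WM (WM WA WC) WA) WA) WC) WC), [:: 1; 0; 4; 3; 2; 5]);
  ((WM (WM (WM (WM WC WC) WC) WA) WC), [:: 1; 2; 0; 5; 3; 4]);
  (WA, [:: 1; 2; 3; 4; 0; 5]);
  ((WM (WM (WM (WM (WM WC WA) WA) WA) WC) WA), [:: 1; 3; 2; 4; 5; 0]);
  ((WM (WM (WM WC WA) WA) WA), [:: 1; 3; 5; 0; 2; 4]);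
  ((WM (WM (WM (WM (WM WA WA) WC) WA) WA) WC), [:: 1; 4; 0; 3; 5; 2]);
  ((WM (WM (WM (WM (WM WA WA) WA) WC) WC) WC), [:: 1; 4; 5; 2; 0; 3]);
  ((WM (WM WA WC) WA), [:: 1; 5; 3; 0; 4; 2]);
  ((WM (WM (WM WA WA) WC) WC), [:: 1; 5; 4; 2; 3; 0]);
  ((WM (WM (WM WA WC) WC) WC), [:: 2; 0; 1; 4; 5; 3]);
  ((WM (WM (WM (WM (WM WA WC) WC) WC) WA) WC), [:: 2; 0; 5; 3; 1; 4]);
  ((WM (WM (WM (WM WC WA) WA) WC) WC), [:: 2; 1; 0; 4; 3; 5]);
  ((WM (WM (WM (WM (WM WA WC) WA) WA) WA) WC), [:: 2; 1; 3; 5; 0; 4]);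
  ((WM WC WC), [:: 2; 3; 1; 5; 4; 0]);
  ((WM WA WA), [:: 2; 3; 4; 0; 1; 5]);
  ((WM (WM (WM WA WA) WA) WC), [:: 2; 4; 3; 0; 5; 1]);
  ((WM (WM (WM WC WC) WA) WC), [:: 2; 4; 5; 1; 3; 0]);
  ((WM (WM (WM (WM WA WA) WC) WC) WA), [:: 2; 5; 0; 3; 4; 1]);
  ((WM (WM (WM WA WC) WA) WA), [:: 2; 5; 4; 1; 0; 3]);
  ((WM (WM (WM (WM WA WA) WA) WC) WA), [:: 3; 0; 4; 1; 5; 2]);
  (WC, [:: 3; 0; 5; 2; 4; 1]);
  ((WM (WM (WM (WM WA WC) WC) WC) WA), [:: 3; 1; 2; 0; 5; 4]);
  ((WM (WM WA WC) WC), [:: 3; 1; 5; 4; 2; 0]);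
  ((WM (WM (WM (WM (WM WA WC) WC) WA) WA) WC), [:: 3; 2; 1; 0; 4; 5]);
  ((WM (WM (WM (WM (WM (WM WA WC) WA) WA) WA) WC) WA), [:: 3; 2; 4; 5; 1; 0]);
  ((WM (WM WA WA) WA), [:: 3; 4; 0; 1; 2; 5]);
  ((WM (WM WC WC) WA), [:: 3; 4; 2; 5; 0; 1]);
  ((WM (WM (WM (WM WA WC) WA) WA) WA), [:: 3; 5; 0; 2; 1; 4]);
  ((WM (WM (WM WC WA) WA) WC), [:: 3; 5; 1; 4; 0; 2]);
  ((WM (WM WC WA) WC), [:: 4; 0; 1; 2; 3; 5]);
  ((WM (WM (WM WC WC) WA) WA), [:: 4; 0; 3; 5; 1; 2]);
  ((WM (WM (WM (WM (WM WA WA) WA) WC) WA) WA), [:: 4; 1; 0; 2; 5; 3]);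
  ((WM WC WA), [:: 4; 1; 5; 3; 0; 2]);
  ((WM (WM (WM (WM WC WA) WC) WC) WC), [:: 4; 2; 3; 1; 5; 0]);
  ((WM (WM (WM WA WC) WC) WA), [:: 4; 2; 5; 0; 3; 1]);
  ((WM (WM (WM WC WA) WC) WC), [:: 4; 3; 0; 5; 2; 1]);
  ((WM (WM (WM (WM WC WC) WA) WA) WC), [:: 4; 3; 2; 1; 0; 5]);
  ((WM (WM (WM (WM WA WC) WC) WA) WC), [:: 4; 5; 1; 3; 2; 0]);
  ((WM (WM (WM (WM WC WA) WA) WC) WA), [:: 4; 5; 2; 0; 1; 3]);
  ((WM (WM (WM (WM (WM WA WA) WC) WA) WA) WA), [:: 5; 0; 2; 1; 3; 4]);
  ((WM (WM (WM (WM (WM WA WA) WA) WC) WC) WA), [:: 5; 0; 3; 4; 2; 1]);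
  ((WM (WM (WM (WM (WM WA WA) WC) WC) WA) WC), [:: 5; 1; 3; 2; 4; 0]);
  ((WM (WM (WM (WM WA WC) WA) WA) WC), [:: 5; 1; 4; 0; 3; 2]);
  ((WM (WM WC WC) WC), [:: 5; 2; 0; 1; 4; 3]);
  ((WM (WM WA WA) WC), [:: 5; 2; 4; 3; 0; 1]);
  ((WM (WM (WM WA WA) WC) WA), [:: 5; 3; 0; 4; 1; 2]);
  ((WM (WM (WM WC WC) WC) WA), [:: 5; 3; 1; 2; 0; 4]);
  ((WM (WM (WM (WM WA WA) WC) WA) WA), [:: 5; 4; 1; 0; 2; 3]);
  ((WM (WM (WM (WM WA WA) WA) WC) WC), [:: 5; 4; 2; 3; 1; 0])].

Definition c5l := [:: 1; 2; 3; 4; 0; 5]%N.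
Definition B0l := [:: 1; 0; 3; 2; 5; 4]%N.
Definition x1l := [:: 1; 2; 3; 4; 0]%N.
Definition x2l := [:: 1; 0; 2; 3; 4]%N.
Definition s5l := [:: 0; 3; 1; 4; 2]%N.

Definition c5 : {perm 'I_6} := @mkperm 5 c5l erefl erefl erefl.
Definition B0 : {perm 'I_6} := @mkperm 5 B0l erefl erefl erefl.
Definition x1 : {perm 'I_5} := @mkperm 4 x1l erefl erefl erefl.
Definition x2 : {perm 'I_5} := @mkperm 4 x2l erefl erefl erefl.
Definition s5 : {perm 'I_5} := @mkperm 4 s5l erefl erefl erefl.

Lemma tb_c5 : tb c5 = c5l. Proof. exact: tb_mkperm. Qed.
Lemma tb_B0 : tb B0 = B0l. Proof. exact: tb_mkperm. Qed.
Lemma tb_x1 : tb x1 = x1l. Proof. exact: tb_mkperm. Qed.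
Lemma tb_x2 : tb x2 = x2l. Proof. exact: tb_mkperm. Qed.
Lemma tb_s5 : tb s5 = s5l. Proof. exact: tb_mkperm. Qed.

Lemma S5_rel1 : (x2 ^+ 2 = 1)%g.
Proof. by apply: tb_inj; rewrite tbX tb1 tb_x2. Qed.
Lemma S5_rel2 : ((x1 * x2) ^+ 4 = 1)%g.
Proof. by apply: tb_inj; rewrite tbX tb1 tbM tb_x1 tb_x2. Qed.
Lemma S5_rel3 : ((x2 * x1 ^+ 2 * x2 * x1 ^+ 3) ^+ 2 = 1)%g.
Proof. by apply: tb_inj; rewrite ?(tbX, tbM, tb1, tb_x1, tb_x2). Qed.
Lemma S5_rel4 : (x1 ^+ 5 = 1)%g.
Proof. by apply: tb_inj; rewrite tbX tb1 tb_x1. Qed.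
Lemma S5_rel5 : (s5 * x1 = x1 ^+ 2 * s5)%g.
Proof. by apply: tb_inj; rewrite ?(tbX, tbM, tb1, tb_x1, tb_s5). Qed.
Lemma x1_neq1 : x1 != 1%g.
Proof. by apply/eqP => /(congr1 tb); rewrite tb1 tb_x1. Qed.

Definition swapl (i j : nat) : seq nat :=
  [seq (if k == i then j else if k == j then i else k) | k <- iota 0 5].

Lemma tb_tperm (i j : 'I_5) : tb (tperm i j) = swapl i j.
Proof.
apply: (@eq_from_nth _ 0%N); first by rewrite size_tb size_map size_iota.
move=> k; rewrite size_tb => Hk.
have -> : k = nat_of_ord (Ordinal Hk) by [].
rewrite nth_tb (nth_map 0%N) ?size_iota // nth_iota // add0n.
case: tpermP => [E|E|Hi Hj]; rewrite -?E /= ?eqxx //.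
- by case: eqP => [->|].
- have /negPf-> : k != i by apply/eqP => E; apply: Hi; apply: val_inj.
  have /negPf-> : k != j by apply/eqP => E; apply: Hj; apply: val_inj.
  by [].
Qed.

Lemma wfor_ok : all (fun i => all (fun j => (i == j) || (lev2 x1l x2l (wfor i j) == swapl i j)) (iota 0 5)) (iota 0 5).
Proof. by vm_compute. Qed.

Lemma tperm_word (i j : 'I_5) : i != j -> tperm i j = ev2 x1 x2 (wfor i j).
Proof.
move=> Hij; apply: tb_inj; rewrite tb_ev2 tb_x1 tb_x2 tb_tperm.
have H1 : (nat_of_ord i \in iota 0 5) by rewrite mem_iota ltn_ord.
have H2 : (nat_of_ord j \in iota 0 5) by rewrite mem_iota ltn_ord.
move/allP: wfor_ok => /(_ _ H1) /allP /(_ _ H2) /orP [|/eqP //].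
by move=> /eqP /val_inj /eqP; rewrite (negPf Hij).
Qed.

Definition lrels (a b : seq nat) :=
  [&& lpow b 2 == iota 0 6, lpow (lcomp a b) 4 == iota 0 6 &
     lpow (lcomp (lcomp (lcomp b (lpow a 2)) b) (lpow a 3)) 2 == iota 0 6].
Definition fixpt (a : seq nat) := head 0%N [seq k <- iota 0 6 | nth 0%N a k == k].
Definition hl (a b : seq nat) :=
  [seq nth 0%N (lpow a k.+1) (nth 0%N b (fixpt a)) | k <- iota 0 5] ++ [:: fixpt a].
Definition nocommon (a b : seq nat) :=
  all (fun k => (nth 0%N a k != k) || (nth 0%N b k != k)) (iota 0 6).
Definition goodh (a b : seq nat) := let h := hl a b in
  [&& uniq h, size h == 6, all (fun k => k < 6)%N h,
      lcomp c5l h == lcomp h a & lcomp B0l h == lcomp h b].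
Definition P6 := permutations (iota 0 6).

Lemma checkC : let P := P6 in
  all (fun a => (lpow a 5 != iota 0 6) || (a == iota 0 6) ||
     all (fun b => ~~ lrels a b || ~~ nocommon a b || goodh a b) P) P.
Proof. vm_compute. reflexivity. Qed.

Lemma checkC2 :
  all (fun a => (lpow a 5 != iota 0 6) || (a == iota 0 6) ||
     all (fun b => ~~ lrels a b || ~~ nocommon a b || goodh a b) P6) P6.
Proof. exact: checkC. Qed.

Lemma tb_in_P6 (p : {perm 'I_6}) : tb p \in P6.
Proof.
rewrite mem_permutations.
have Hu : uniq (tb p).
  rewrite map_inj_uniq ?enum_uniq // => i j /val_inj; exact: perm_inj.
have Hs : {subset tb p <= iota 0 6}.
  by move=> x /mapP [i _ ->]; rewrite mem_iota ltn_ord.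
have Hz : (size (iota 0 6) <= size (tb p))%N by rewrite size_tb size_iota.
have [_ E] := uniq_min_size Hu Hs Hz.
apply: uniq_perm => //; exact: iota_uniq.
Qed.

Lemma get_tau (a b : {perm 'I_6}) :
  (a ^+ 5 = 1)%g -> a != 1%g -> (b ^+ 2 = 1)%g -> ((a * b) ^+ 4 = 1)%g ->
  ((b * a ^+ 2 * b * a ^+ 3) ^+ 2 = 1)%g ->
  (forall k : 'I_6, a k = k -> b k = k -> False) ->
  exists tau : {perm 'I_6},
    (forall i, c5 (tau i) = tau (a i)) /\ (forall i, B0 (tau i) = tau (b i)).
Proof.
move=> R1 Ra R2 R3 R4 NC.
move/allP: checkC2 => /(_ _ (tb_in_P6 a)).
have -> : (lpow (tb a) 5 != iota 0 6) = false.
  by rewrite -tbX R1 tb1 eqxx.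
have -> : (tb a == iota 0 6) = false.
  apply/negbTE; apply: contra Ra; rewrite -(tb1 6) => /eqP E.
  by apply/eqP; apply: tb_inj.
rewrite !orFb => /allP /(_ _ (tb_in_P6 b)).
have -> : lrels (tb a) (tb b).
  by rewrite /lrels -!tbX -!tbM -!tbX R2 R3 R4 tb1 !eqxx.
have -> : nocommon (tb a) (tb b).
  apply/allP => k; rewrite mem_iota add0n leq0n andTb => Hk.
  have -> : k = nat_of_ord (Ordinal Hk) by [].
  rewrite !nth_tb -negb_and; apply/negP => /andP [/eqP E1 /eqP E2].
  by apply: (NC (Ordinal Hk)); apply: val_inj.
rewrite /negb /goodh.
set h := hl (tb a) (tb b).
move=> /and5P [Hu /eqP Hs Ha E1 E2].
pose H := @mkperm 5 h Hu Hs Ha.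
have tbH : tb H = h by exact: tb_mkperm.
have K1 : (c5 * H = H * a)%g.
  by apply: tb_inj; rewrite !tbM tbH tb_c5; apply/eqP.
have K2 : (B0 * H = H * b)%g.
  by apply: tb_inj; rewrite !tbM tbH tb_B0; apply/eqP.
exists H^-1%g; split => i.
- apply: (@perm_inj _ H); rewrite permKV.
  have := congr1 (fun p : {perm 'I_6} => p (H^-1%g i)) K1.
  by rewrite !permM permKV => ->.
- apply: (@perm_inj _ H); rewrite permKV.
  have := congr1 (fun p : {perm 'I_6} => p (H^-1%g i)) K2.
  by rewrite !permM permKV => ->.
Qed.
Definition AVe (e0 e1 e2 e3 e4 e5 : nat) (y0 y1 y2 y3 y4 y5 : CC) : CC :=
  (y0 ^+ e0 * y1 ^+ e1 * y2 ^+ e2 * y3 ^+ e3 * y4 ^+ e4 * y5 ^+ e5 + (y0 ^+ e0 * y1 ^+ e1 * y4 ^+ e2 * y5 ^+ e3 * y2 ^+ e4 * y3 ^+ e5 + (y0 ^+ e0 * y2 ^+ e1 * y1 ^+ e2 * y3 ^+ e3 * y5 ^+ e4 * y4 ^+ e5 + (y0 ^+ e0 * y2 ^+ e1 * y5 ^+ e2 * y4 ^+ e3 * y1 ^+ e4 * y3 ^+ e5 + (y0 ^+ e0 * y3 ^+ e1 * y4 ^+ e2 * y2 ^+ e3 * y5 ^+ e4 * y1 ^+ e5 + (y0 ^+ e0 * y3 ^+ e1 * y5 ^+ e2 * y1 ^+ e3 * y4 ^+ e4 * y2 ^+ e5 + (y0 ^+ e0 * y4 ^+ e1 * y1 ^+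 e2 * y5 ^+ e3 * y3 ^+ e4 * y2 ^+ e5 + (y0 ^+ e0 * y4 ^+ e1 * y3 ^+ e2 * y2 ^+ e3 * y1 ^+ e4 * y5 ^+ e5 + (y0 ^+ e0 * y5 ^+ e1 * y2 ^+ e2 * y4 ^+ e3 * y3 ^+ e4 * y1 ^+ e5 + (y0 ^+ e0 * y5 ^+ e1 * y3 ^+ e2 * y1 ^+ e3 * y2 ^+ e4 * y4 ^+ e5 + (y1 ^+ e0 * y0 ^+ e1 * y2 ^+ e2 * y5 ^+ e3 * y4 ^+ e4 * y3 ^+ e5 + (y1 ^+ e0 * y0 ^+ e1 * y4 ^+ e2 * y3 ^+ e3 * y2 ^+ e4 * y5 ^+ e5 + (y1 ^+ e0 * y2 ^+ e1 * y0 ^+ e2 * y5 ^+ e3 * y3 ^+ e4 * y4 ^+ e5 + (y1 ^+ e0 * y2 ^+ e1 * y3 ^+ e2 * y4 ^+ e3 * y0 ^+ e4 * y5 ^+ e5 + (y1 ^+ e0 * y3 ^+ e1 * y2 ^+ e2 * y4 ^+ e3 * y5 ^+ e4 * y0 ^+ e5 + (y1 ^+ e0 * y3 ^+ e1 * y5 ^+ e2 * y0 ^+ e3 * y2 ^+ e4 * y4 ^+ e5 + (y1 ^+ e0 * y4 ^+ e1 * y0 ^+ e2 * y3 ^+ e3 * y5 ^+ e4 * y2 ^+ e5 + (y1 ^+ e0 * y4 ^+ e1 * y5 ^+ e2 * y2 ^+ e3 * y0 ^+ e4 * y3 ^+ e5 + (y1 ^+ e0 * y5 ^+ e1 * y3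 ^+ e2 * y0 ^+ e3 * y4 ^+ e4 * y2 ^+ e5 + (y1 ^+ e0 * y5 ^+ e1 * y4 ^+ e2 * y2 ^+ e3 * y3 ^+ e4 * y0 ^+ e5 + (y2 ^+ e0 * y0 ^+ e1 * y1 ^+ e2 * y4 ^+ e3 * y5 ^+ e4 * y3 ^+ e5 + (y2 ^+ e0 * y0 ^+ e1 * y5 ^+ e2 * y3 ^+ e3 * y1 ^+ e4 * y4 ^+ e5 + (y2 ^+ e0 * y1 ^+ e1 * y0 ^+ e2 * y4 ^+ e3 * y3 ^+ e4 * y5 ^+ e5 + (y2 ^+ e0 * y1 ^+ e1 * y3 ^+ e2 * y5 ^+ e3 * y0 ^+ e4 * y4 ^+ e5 + (y2 ^+ e0 * y3 ^+ e1 * y1 ^+ e2 * y5 ^+ e3 * y4 ^+ e4 * y0 ^+ e5 + (y2 ^+ e0 * y3 ^+ e1 * y4 ^+ e2 * y0 ^+ e3 * y1 ^+ e4 * y5 ^+ e5 + (y2 ^+ e0 * y4 ^+ e1 * y3 ^+ e2 * y0 ^+ e3 * y5 ^+ e4 * y1 ^+ e5 + (y2 ^+ e0 * y4 ^+ e1 * y5 ^+ e2 * y1 ^+ e3 * y3 ^+ e4 * y0 ^+ e5 + (y2 ^+ e0 * y5 ^+ e1 * y0 ^+ e2 * y3 ^+ e3 * y4 ^+ e4 * y1 ^+ e5 + (y2 ^+ e0 * y5 ^+ e1 * y4 ^+ e2 * y1 ^+ e3 * y0 ^+ e4 * y3 ^+ e5 + (y3 ^+ e0 * y0 ^+ e1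 * y4 ^+ e2 * y1 ^+ e3 * y5 ^+ e4 * y2 ^+ e5 + (y3 ^+ e0 * y0 ^+ e1 * y5 ^+ e2 * y2 ^+ e3 * y4 ^+ e4 * y1 ^+ e5 + (y3 ^+ e0 * y1 ^+ e1 * y2 ^+ e2 * y0 ^+ e3 * y5 ^+ e4 * y4 ^+ e5 + (y3 ^+ e0 * y1 ^+ e1 * y5 ^+ e2 * y4 ^+ e3 * y2 ^+ e4 * y0 ^+ e5 + (y3 ^+ e0 * y2 ^+ e1 * y1 ^+ e2 * y0 ^+ e3 * y4 ^+ e4 * y5 ^+ e5 + (y3 ^+ e0 * y2 ^+ e1 * y4 ^+ e2 * y5 ^+ e3 * y1 ^+ e4 * y0 ^+ e5 + (y3 ^+ e0 * y4 ^+ e1 * y0 ^+ e2 * y1 ^+ e3 * y2 ^+ e4 * y5 ^+ e5 + (y3 ^+ e0 * y4 ^+ e1 * y2 ^+ e2 * y5 ^+ e3 * y0 ^+ e4 * y1 ^+ e5 + (y3 ^+ e0 * y5 ^+ e1 * y0 ^+ e2 * y2 ^+ e3 * y1 ^+ e4 * y4 ^+ e5 + (y3 ^+ e0 * y5 ^+ e1 * y1 ^+ e2 * y4 ^+ e3 * y0 ^+ e4 * y2 ^+ e5 + (y4 ^+ e0 * y0 ^+ e1 * y1 ^+ e2 * y2 ^+ e3 * y3 ^+ e4 * y5 ^+ e5 + (y4 ^+ e0 * y0 ^+ e1 * y3 ^+ e2 * y5 ^+ e3 * y1 ^+ e4 * y2 ^+ e5 + (y4 ^+ e0 * y1 ^+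 e1 * y0 ^+ e2 * y2 ^+ e3 * y5 ^+ e4 * y3 ^+ e5 + (y4 ^+ e0 * y1 ^+ e1 * y5 ^+ e2 * y3 ^+ e3 * y0 ^+ e4 * y2 ^+ e5 + (y4 ^+ e0 * y2 ^+ e1 * y3 ^+ e2 * y1 ^+ e3 * y5 ^+ e4 * y0 ^+ e5 + (y4 ^+ e0 * y2 ^+ e1 * y5 ^+ e2 * y0 ^+ e3 * y3 ^+ e4 * y1 ^+ e5 + (y4 ^+ e0 * y3 ^+ e1 * y0 ^+ e2 * y5 ^+ e3 * y2 ^+ e4 * y1 ^+ e5 + (y4 ^+ e0 * y3 ^+ e1 * y2 ^+ e2 * y1 ^+ e3 * y0 ^+ e4 * y5 ^+ e5 + (y4 ^+ e0 * y5 ^+ e1 * y1 ^+ e2 * y3 ^+ e3 * y2 ^+ e4 * y0 ^+ e5 + (y4 ^+ e0 * y5 ^+ e1 * y2 ^+ e2 * y0 ^+ e3 * y1 ^+ e4 * y3 ^+ e5 + (y5 ^+ e0 * y0 ^+ e1 * y2 ^+ e2 * y1 ^+ e3 * y3 ^+ e4 * y4 ^+ e5 + (y5 ^+ e0 * y0 ^+ e1 * y3 ^+ e2 * y4 ^+ e3 * y2 ^+ e4 * y1 ^+ e5 + (y5 ^+ e0 * y1 ^+ e1 * y3 ^+ e2 * y2 ^+ e3 * y4 ^+ e4 * y0 ^+ e5 + (y5 ^+ e0 * y1 ^+ e1 * y4 ^+ e2 * y0 ^+ e3 * y3 ^+ e4 * y2 ^+ e5 + (y5 ^+ e0 * y2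 ^+ e1 * y0 ^+ e2 * y1 ^+ e3 * y4 ^+ e4 * y3 ^+ e5 + (y5 ^+ e0 * y2 ^+ e1 * y4 ^+ e2 * y3 ^+ e3 * y0 ^+ e4 * y1 ^+ e5 + (y5 ^+ e0 * y3 ^+ e1 * y0 ^+ e2 * y4 ^+ e3 * y1 ^+ e4 * y2 ^+ e5 + (y5 ^+ e0 * y3 ^+ e1 * y1 ^+ e2 * y2 ^+ e3 * y0 ^+ e4 * y4 ^+ e5 + (y5 ^+ e0 * y4 ^+ e1 * y1 ^+ e2 * y0 ^+ e3 * y2 ^+ e4 * y3 ^+ e5 + (y5 ^+ e0 * y4 ^+ e1 * y2 ^+ e2 * y3 ^+ e3 * y1 ^+ e4 * y0 ^+ e5 + 0)))))))))))))))))))))))))))))))))))))))))))))))))))))))))))).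

Definition btab (e0 e1 e2 e3 e4 e5 : nat) : CC :=
  match e0, e1, e2, e3, e4, e5 with
  | 0, 0, 0, 0, 0, 4 => 0
  | 0, 0, 0, 0, 1, 3 => 0
  | 0, 0, 0, 0, 2, 2 => 4%:R
  | 0, 0, 0, 0, 3, 1 => 0
  | 0, 0, 0, 0, 4, 0 => 0
  | 0, 0, 0, 1, 0, 3 => 0
  | 0, 0, 0, 1, 1, 2 => - 1%:R
  | 0, 0, 0, 1, 2, 1 => - 1%:R
  | 0, 0, 0, 1, 3, 0 => 0
  | 0, 0, 0, 2, 0, 2 => 4%:R
  | 0, 0, 0, 2, 1, 1 => - 1%:R
  | 0, 0, 0, 2, 2, 0 => 4%:R
  | 0, 0, 0, 3, 0, 1 => 0
  | 0, 0, 0, 3, 1, 0 => 0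
  | 0, 0, 0, 4, 0, 0 => 0
  | 0, 0, 1, 0, 0, 3 => 0
  | 0, 0, 1, 0, 1, 2 => - 1%:R
  | 0, 0, 1, 0, 2, 1 => - 1%:R
  | 0, 0, 1, 0, 3, 0 => 0
  | 0, 0, 1, 1, 0, 2 => - 1%:R
  | 0, 0, 1, 1, 1, 1 => 1%:R
  | 0, 0, 1, 1, 2, 0 => - 1%:R
  | 0, 0, 1, 2, 0, 1 => - 1%:R
  | 0, 0, 1, 2, 1, 0 => - 1%:R
  | 0, 0, 1, 3, 0, 0 => 0
  | 0, 0, 2, 0, 0, 2 => 4%:R
  | 0, 0, 2, 0, 1, 1 => - 1%:R
  | 0, 0, 2, 0, 2, 0 => 4%:R
  | 0, 0, 2, 1, 0, 1 => - 1%:R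
  | 0, 0, 2, 1, 1, 0 => - 1%:R
  | 0, 0, 2, 2, 0, 0 => 4%:R
  | 0, 0, 3, 0, 0, 1 => 0
  | 0, 0, 3, 0, 1, 0 => 0
  | 0, 0, 3, 1, 0, 0 => 0
  | 0, 0, 4, 0, 0, 0 => 0
  | 0, 1, 0, 0, 0, 3 => 0
  | 0, 1, 0, 0, 1, 2 => - 1%:R
  | 0, 1, 0, 0, 2, 1 => - 1%:R
  | 0, 1, 0, 0, 3, 0 => 0
  | 0, 1, 0, 1, 0, 2 => - 1%:R
  | 0, 1, 0, 1, 1, 1 => 1%:R
  | 0, 1, 0, 1, 2, 0 => - 1%:R
  | 0, 1, 0, 2, 0, 1 => - 1%:R
  | 0, 1, 0, 2, 1, 0 => - 1%:R
  | 0, 1, 0, 3, 0, 0 => 0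
  | 0, 1, 1, 0, 0, 2 => - 1%:R
  | 0, 1, 1, 0, 1, 1 => 1%:R
  | 0, 1, 1, 0, 2, 0 => - 1%:R
  | 0, 1, 1, 1, 0, 1 => 1%:R
  | 0, 1, 1, 1, 1, 0 => 1%:R
  | 0, 1, 1, 2, 0, 0 => - 1%:R
  | 0, 1, 2, 0, 0, 1 => - 1%:R
  | 0, 1, 2, 0, 1, 0 => - 1%:R
  | 0, 1, 2, 1, 0, 0 => - 1%:R
  | 0, 1, 3, 0, 0, 0 => 0
  | 0, 2, 0, 0, 0, 2 => 4%:R
  | 0, 2, 0, 0, 1, 1 => - 1%:R
  | 0, 2, 0, 0, 2, 0 => 4%:R
  | 0, 2, 0, 1, 0, 1 => - 1%:R
  | 0, 2, 0, 1, 1, 0 => - 1%:R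
  | 0, 2, 0, 2, 0, 0 => 4%:R
  | 0, 2, 1, 0, 0, 1 => - 1%:R
  | 0, 2, 1, 0, 1, 0 => - 1%:R
  | 0, 2, 1, 1, 0, 0 => - 1%:R
  | 0, 2, 2, 0, 0, 0 => 4%:R
  | 0, 3, 0, 0, 0, 1 => 0
  | 0, 3, 0, 0, 1, 0 => 0
  | 0, 3, 0, 1, 0, 0 => 0
  | 0, 3, 1, 0, 0, 0 => 0
  | 0, 4, 0, 0, 0, 0 => 0
  | 1, 0, 0, 0, 0, 3 => 0
  | 1, 0, 0, 0, 1, 2 => - 1%:R
  | 1, 0, 0, 0, 2, 1 => - 1%:R
  | 1, 0, 0, 0, 3, 0 => 0
  | 1, 0, 0, 1, 0, 2 => - 1%:R
  | 1, 0, 0, 1, 1, 1 => 1%:R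
  | 1, 0, 0, 1, 2, 0 => - 1%:R
  | 1, 0, 0, 2, 0, 1 => - 1%:R
  | 1, 0, 0, 2, 1, 0 => - 1%:R
  | 1, 0, 0, 3, 0, 0 => 0
  | 1, 0, 1, 0, 0, 2 => - 1%:R
  | 1, 0, 1, 0, 1, 1 => 1%:R
  | 1, 0, 1, 0, 2, 0 => - 1%:R
  | 1, 0, 1, 1, 0, 1 => 1%:R
  | 1, 0, 1, 1, 1, 0 => 1%:R
  | 1, 0, 1, 2, 0, 0 => - 1%:R
  | 1, 0, 2, 0, 0, 1 => - 1%:R
  | 1, 0, 2, 0, 1, 0 => - 1%:R
  | 1, 0, 2, 1, 0, 0 => - 1%:R
  | 1, 0, 3, 0, 0, 0 => 0
  | 1, 1, 0, 0, 0, 2 => - 1%:R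
  | 1, 1, 0, 0, 1, 1 => 1%:R
  | 1, 1, 0, 0, 2, 0 => - 1%:R
  | 1, 1, 0, 1, 0, 1 => 1%:R
  | 1, 1, 0, 1, 1, 0 => 1%:R
  | 1, 1, 0, 2, 0, 0 => - 1%:R
  | 1, 1, 1, 0, 0, 1 => 1%:R
  | 1, 1, 1, 0, 1, 0 => 1%:R
  | 1, 1, 1, 1, 0, 0 => 1%:R
  | 1, 1, 2, 0, 0, 0 => - 1%:R
  | 1, 2, 0, 0, 0, 1 => - 1%:R
  | 1, 2, 0, 0, 1, 0 => - 1%:R
  | 1, 2, 0, 1, 0, 0 => - 1%:R
  | 1, 2, 1, 0, 0, 0 => - 1%:R
  | 1, 3, 0, 0, 0, 0 => 0
  | 2, 0, 0, 0, 0, 2 => 4%:R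
  | 2, 0, 0, 0, 1, 1 => - 1%:R
  | 2, 0, 0, 0, 2, 0 => 4%:R
  | 2, 0, 0, 1, 0, 1 => - 1%:R
  | 2, 0, 0, 1, 1, 0 => - 1%:R
  | 2, 0, 0, 2, 0, 0 => 4%:R
  | 2, 0, 1, 0, 0, 1 => - 1%:R
  | 2, 0, 1, 0, 1, 0 => - 1%:R
  | 2, 0, 1, 1, 0, 0 => - 1%:R
  | 2, 0, 2, 0, 0, 0 => 4%:R
  | 2, 1, 0, 0, 0, 1 => - 1%:R
  | 2, 1, 0, 0, 1, 0 => - 1%:R
  | 2, 1, 0, 1, 0, 0 => - 1%:R
  | 2, 1, 1, 0, 0, 0 => - 1%:R
  | 2, 2, 0, 0, 0, 0 => 4%:R
  | 3, 0, 0, 0, 0, 1 => 0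
  | 3, 0, 0, 0, 1, 0 => 0
  | 3, 0, 0, 1, 0, 0 => 0
  | 3, 0, 1, 0, 0, 0 => 0
  | 3, 1, 0, 0, 0, 0 => 0
  | 4, 0, 0, 0, 0, 0 => 0
  | _, _, _, _, _, _ => 0
  end.

Definition gtab (e0 e1 e2 e3 e4 e5 : nat) : CC :=
  match e0, e1, e2, e3, e4, e5 with
  | 0, 0, 0, 0, 0, 4 => 20%:R
  | 0, 0, 0, 0, 1, 3 => - 4%:R
  | 0, 0, 0, 0, 2, 2 => - 4%:R
  | 0, 0, 0, 0, 3, 1 => - 4%:R
  | 0, 0, 0, 0, 4, 0 => 20%:R
  | 0, 0, 0, 1, 0, 3 => - 4%:R
  | 0, 0, 0, 1, 1, 2 => 2%:R
  | 0, 0, 0, 1, 2, 1 => 2%:R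
  | 0, 0, 0, 1, 3, 0 => - 4%:R
  | 0, 0, 0, 2, 0, 2 => - 4%:R
  | 0, 0, 0, 2, 1, 1 => 2%:R
  | 0, 0, 0, 2, 2, 0 => - 4%:R
  | 0, 0, 0, 3, 0, 1 => - 4%:R
  | 0, 0, 0, 3, 1, 0 => - 4%:R
  | 0, 0, 0, 4, 0, 0 => 20%:R
  | 0, 0, 1, 0, 0, 3 => - 4%:R
  | 0, 0, 1, 0, 1, 2 => 2%:R
  | 0, 0, 1, 0, 2, 1 => 2%:R
  | 0, 0, 1, 0, 3, 0 => - 4%:R
  | 0, 0, 1, 1, 0, 2 => 2%:R
  | 0, 0, 1, 1, 1, 1 => - 2%:R
  | 0, 0, 1, 1, 2, 0 => 2%:R
  | 0, 0, 1, 2, 0, 1 => 2%:R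
  | 0, 0, 1, 2, 1, 0 => 2%:R
  | 0, 0, 1, 3, 0, 0 => - 4%:R
  | 0, 0, 2, 0, 0, 2 => - 4%:R
  | 0, 0, 2, 0, 1, 1 => 2%:R
  | 0, 0, 2, 0, 2, 0 => - 4%:R
  | 0, 0, 2, 1, 0, 1 => 2%:R
  | 0, 0, 2, 1, 1, 0 => 2%:R
  | 0, 0, 2, 2, 0, 0 => - 4%:R
  | 0, 0, 3, 0, 0, 1 => - 4%:R
  | 0, 0, 3, 0, 1, 0 => - 4%:R
  | 0, 0, 3, 1, 0, 0 => - 4%:R
  | 0, 0, 4, 0, 0, 0 => 20%:R
  | 0, 1, 0, 0, 0, 3 => - 4%:R
  | 0, 1, 0, 0, 1, 2 => 2%:R
  | 0, 1, 0, 0, 2, 1 => 2%:R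
  | 0, 1, 0, 0, 3, 0 => - 4%:R
  | 0, 1, 0, 1, 0, 2 => 2%:R
  | 0, 1, 0, 1, 1, 1 => - 2%:R
  | 0, 1, 0, 1, 2, 0 => 2%:R
  | 0, 1, 0, 2, 0, 1 => 2%:R
  | 0, 1, 0, 2, 1, 0 => 2%:R
  | 0, 1, 0, 3, 0, 0 => - 4%:R
  | 0, 1, 1, 0, 0, 2 => 2%:R
  | 0, 1, 1, 0, 1, 1 => - 2%:R
  | 0, 1, 1, 0, 2, 0 => 2%:R
  | 0, 1, 1, 1, 0, 1 => - 2%:R
  | 0, 1, 1, 1, 1, 0 => - 2%:R
  | 0, 1, 1, 2, 0, 0 => 2%:R
  | 0, 1, 2, 0, 0, 1 => 2%:R
  | 0, 1, 2, 0, 1, 0 => 2%:R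
  | 0, 1, 2, 1, 0, 0 => 2%:R
  | 0, 1, 3, 0, 0, 0 => - 4%:R
  | 0, 2, 0, 0, 0, 2 => - 4%:R
  | 0, 2, 0, 0, 1, 1 => 2%:R
  | 0, 2, 0, 0, 2, 0 => - 4%:R
  | 0, 2, 0, 1, 0, 1 => 2%:R
  | 0, 2, 0, 1, 1, 0 => 2%:R
  | 0, 2, 0, 2, 0, 0 => - 4%:R
  | 0, 2, 1, 0, 0, 1 => 2%:R
  | 0, 2, 1, 0, 1, 0 => 2%:R
  | 0, 2, 1, 1, 0, 0 => 2%:R
  | 0, 2, 2, 0, 0, 0 => - 4%:R
  | 0, 3, 0, 0, 0, 1 => - 4%:R
  | 0, 3, 0, 0, 1, 0 => - 4%:R
  | 0, 3, 0, 1, 0, 0 => - 4%:R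
  | 0, 3, 1, 0, 0, 0 => - 4%:R
  | 0, 4, 0, 0, 0, 0 => 20%:R
  | 1, 0, 0, 0, 0, 3 => - 4%:R
  | 1, 0, 0, 0, 1, 2 => 2%:R
  | 1, 0, 0, 0, 2, 1 => 2%:R
  | 1, 0, 0, 0, 3, 0 => - 4%:R
  | 1, 0, 0, 1, 0, 2 => 2%:R
  | 1, 0, 0, 1, 1, 1 => - 2%:R
  | 1, 0, 0, 1, 2, 0 => 2%:R
  | 1, 0, 0, 2, 0, 1 => 2%:R
  | 1, 0, 0, 2, 1, 0 => 2%:R
  | 1, 0, 0, 3, 0, 0 => - 4%:R
  | 1, 0, 1, 0, 0, 2 => 2%:R
  | 1, 0, 1, 0, 1, 1 => - 2%:R
  | 1, 0, 1, 0, 2, 0 => 2%:R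
  | 1, 0, 1, 1, 0, 1 => - 2%:R
  | 1, 0, 1, 1, 1, 0 => - 2%:R
  | 1, 0, 1, 2, 0, 0 => 2%:R
  | 1, 0, 2, 0, 0, 1 => 2%:R
  | 1, 0, 2, 0, 1, 0 => 2%:R
  | 1, 0, 2, 1, 0, 0 => 2%:R
  | 1, 0, 3, 0, 0, 0 => - 4%:R
  | 1, 1, 0, 0, 0, 2 => 2%:R
  | 1, 1, 0, 0, 1, 1 => - 2%:R
  | 1, 1, 0, 0, 2, 0 => 2%:R
  | 1, 1, 0, 1, 0, 1 => - 2%:R
  | 1, 1, 0, 1, 1, 0 => - 2%:R
  | 1, 1, 0, 2, 0, 0 => 2%:R
  | 1, 1, 1, 0, 0, 1 => - 2%:R
  | 1, 1, 1, 0, 1, 0 => - 2%:R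
  | 1, 1, 1, 1, 0, 0 => - 2%:R
  | 1, 1, 2, 0, 0, 0 => 2%:R
  | 1, 2, 0, 0, 0, 1 => 2%:R
  | 1, 2, 0, 0, 1, 0 => 2%:R
  | 1, 2, 0, 1, 0, 0 => 2%:R
  | 1, 2, 1, 0, 0, 0 => 2%:R
  | 1, 3, 0, 0, 0, 0 => - 4%:R
  | 2, 0, 0, 0, 0, 2 => - 4%:R
  | 2, 0, 0, 0, 1, 1 => 2%:R
  | 2, 0, 0, 0, 2, 0 => - 4%:R
  | 2, 0, 0, 1, 0, 1 => 2%:R
  | 2, 0, 0, 1, 1, 0 => 2%:R
  | 2, 0, 0, 2, 0, 0 => - 4%:R
  | 2, 0, 1, 0, 0, 1 => 2%:R
  | 2, 0, 1, 0, 1, 0 => 2%:R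
  | 2, 0, 1, 1, 0, 0 => 2%:R
  | 2, 0, 2, 0, 0, 0 => - 4%:R
  | 2, 1, 0, 0, 0, 1 => 2%:R
  | 2, 1, 0, 0, 1, 0 => 2%:R
  | 2, 1, 0, 1, 0, 0 => 2%:R
  | 2, 1, 1, 0, 0, 0 => 2%:R
  | 2, 2, 0, 0, 0, 0 => - 4%:R
  | 3, 0, 0, 0, 0, 1 => - 4%:R
  | 3, 0, 0, 0, 1, 0 => - 4%:R
  | 3, 0, 0, 1, 0, 0 => - 4%:R
  | 3, 0, 1, 0, 0, 0 => - 4%:R
  | 3, 1, 0, 0, 0, 0 => - 4%:R
  | 4, 0, 0, 0, 0, 0 => 20%:R
  | _, _, _, _, _, _ => 0
  end.

Notation P2e y0 y1 y2 y3 y4 y5 := (y0 ^+ 2 + y1 ^+ 2 + y2 ^+ 2 + y3 ^+ 2 + y4 ^+ 2 + y5 ^+ 2).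
Notation P4e y0 y1 y2 y3 y4 y5 := (y0 ^+ 4 + y1 ^+ 4 + y2 ^+ 4 + y3 ^+ 4 + y4 ^+ 4 + y5 ^+ 4).

Lemma Avg_core (e0 e1 e2 e3 e4 e5 : nat) : (e0 + e1 + e2 + e3 + e4 + e5 = 4)%N ->
  forall y0 y1 y2 y3 y4 y5 : CC, y0 + y1 + y2 + y3 + y4 + y5 = 0 ->
  2%:R * AVe e0 e1 e2 e3 e4 e5 y0 y1 y2 y3 y4 y5 =
  btab e0 e1 e2 e3 e4 e5 * (P2e y0 y1 y2 y3 y4 y5) ^+ 2 +
  gtab e0 e1 e2 e3 e4 e5 * P4e y0 y1 y2 y3 y4 y5.
Proof.
move=> He y0 y1 y2 y3 y4 y5 H.
have E : y5 = (y0 + y1 + y2 + y3 + y4 + y5) - (y0 + y1 + y2 + y3 + y4) by ring.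
rewrite H sub0r in E; rewrite E; clear E H.
destruct e0 as [|[|[|[|[|e0]]]]]; try lia;
destruct e1 as [|[|[|[|[|e1]]]]]; try lia;
destruct e2 as [|[|[|[|[|e2]]]]]; try lia;
destruct e3 as [|[|[|[|[|e3]]]]]; try lia;
destruct e4 as [|[|[|[|[|e4]]]]]; try lia;
destruct e5 as [|[|[|[|[|e5]]]]]; try lia;
cbv [btab gtab AVe]; ring.
Time Qed.

Definition p2 (y : pt) : CC := \sum_(i < 6) y i ^+ 2.
Definition p4 (y : pt) : CC := \sum_(i < 6) y i ^+ 4.
Definition tab (t : seq nat) (j : 'I_6) : 'I_6 := inord (nth 0%N t j).
Definition avgsum (e : 'I_6 -> nat) (y : pt) : CC :=
  \sum_(wt <- WT) \prod_(j < 6) y (tab wt.2 j) ^+ e j.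

Lemma ord6E (j : 'I_6) k : nat_of_ord j = k -> j = inord k.
Proof. by move=> <-; rewrite inord_val. Qed.

Lemma prod6 (F : 'I_6 -> CC) : \prod_(j < 6) F j =
  F (inord 0) * F (inord 1) * F (inord 2) * F (inord 3) * F (inord 4) * F (inord 5).
Proof.
rewrite !big_ord_recr big_ord0 /= mul1r.
by congr (_ * _ * _ * _ * _ * _); congr F; apply: ord6E.
Qed.

Lemma sum6 (F : 'I_6 -> CC) : \sum_(j < 6) F j =
  F (inord 0) + F (inord 1) + F (inord 2) + F (inord 3) + F (inord 4) + F (inord 5).
Proof.
rewrite !big_ord_recr big_ord0 /= add0r.
by congr (_ + _ + _ + _ + _ + _); congr F; apply: ord6E.
Qed.

Lemma nsum6 (F : 'I_6 -> nat) : (\sum_(j < 6) F j =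
  F (inord 0) + F (inord 1) + F (inord 2) + F (inord 3) + F (inord 4) + F (inord 5))%N.
Proof.
rewrite !big_ord_recr big_ord0 /= add0n.
by congr (_ + _ + _ + _ + _ + _)%N; congr F; apply: ord6E.
Qed.

Lemma avg_lemma (e : 'I_6 -> nat) : (\sum_(i < 6) e i)%N = 4%N ->
  forall y, in_P4 y ->
  2%:R * avgsum e y =
  btab (e (inord 0)) (e (inord 1)) (e (inord 2)) (e (inord 3)) (e (inord 4)) (e (inord 5))
    * p2 y ^+ 2 +
  gtab (e (inord 0)) (e (inord 1)) (e (inord 2)) (e (inord 3)) (e (inord 4)) (e (inord 5))
    * p4 y.
Proof.
move=> He y Hy; rewrite nsum6 in He; rewrite /in_P4 sum6 in Hy.
rewrite /p2 /p4 !sum6 -(@Avg_core _ _ _ _ _ _ He _ _ _ _ _ _ Hy); congr (_ * _).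
rewrite /avgsum /WT !big_cons big_nil !prod6 /tab !inordK //;
  try (cbn [nth snd]; reflexivity).
Qed.

Lemma sum_permpt (g : {perm 'I_6}) (F : CC -> CC) (x : pt) :
  \sum_(i < 6) F (permpt g x i) = \sum_(i < 6) F (x i).
Proof.
rewrite /permpt; symmetry.
exact: (reindex_inj (h := g) (@perm_inj _ g)).
Qed.

Lemma inP4_permpt g x : in_P4 x -> in_P4 (permpt g x).
Proof. by rewrite /in_P4 => H; rewrite (sum_permpt g id). Qed.

Lemma p2_permpt g x : p2 (permpt g x) = p2 x.
Proof. exact: (sum_permpt g (fun c => c ^+ 2)). Qed.
Lemma p4_permpt g x : p4 (permpt g x) = p4 x.
Proof. exact: (sum_permpt g (fun c => c ^+ 4)). Qed.

Definition inv_by (f : {mpoly CC[6]}) (g : {perm 'I_6}) (k : CC) :=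
  forall x, in_P4 x -> f.@[permpt g x] = k * f.@[x].

Lemma inv_byM f u v ku kv : inv_by f u ku -> inv_by f v kv -> inv_by f (u * v)%g (ku * kv).
Proof.
move=> Hu Hv x Hx.
have -> : f.@[permpt (u * v)%g x] = f.@[permpt u (permpt v x)].
  by apply: meval_eq => i; rewrite /permpt permM.
by rewrite (Hu _ (inP4_permpt v x Hx)) (Hv _ Hx) mulrA.
Qed.

Arguments inv_byM {f u v ku kv}.

Lemma inv_by1 f : inv_by f 1%g 1.
Proof. by move=> x _; rewrite mul1r; apply: meval_eq => i; rewrite /permpt perm1. Qed.

Lemma inv_by_uniq f g k1 k2 x0 : in_P4 x0 -> f.@[x0] != 0 ->
  inv_by f g k1 -> inv_by f g k2 -> k1 = k2.
Proof.
move=> Hx0 Hf H1 H2; have := H1 _ Hx0; rewrite H2 // => /eqP.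
by rewrite eq_sym (can2_eq (mulfK Hf) (divfK Hf)) mulfK // => /eqP.
Qed.

Lemma ev_inv f (p q : {perm 'I_6}) kq w : inv_by f p 1 -> inv_by f q kq -> kq * kq = 1 ->
  inv_by f (ev p q w) 1.
Proof.
move=> Hp Hq Hk; elim: w => /= [||u IHu v IHv] //.
- have := inv_byM (inv_byM Hq Hp) Hq; by rewrite mulr1 Hk.
- by have := inv_byM IHu IHv; rewrite mulr1.
Qed.

Lemma ev_intw (tau p0 q0 p q : {perm 'I_6}) w :
  (forall i, p0 (tau i) = tau (p i)) -> (forall i, q0 (tau i) = tau (q i)) ->
  forall i, ev p0 q0 w (tau i) = tau (ev p q w i).
Proof.
move=> Hp Hq; elim: w => [||u IHu v IHv] i /=; rewrite ?permM.
- exact: Hp.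
- by rewrite Hq Hp Hq.
- by rewrite IHu IHv.
Qed.

Lemma WT_ok : all (fun wt => lev c5l B0l wt.1 == wt.2) WT.
Proof. by vm_compute. Qed.

Definition okwt (wt : wd * seq nat) := lev c5l B0l wt.1 == wt.2.

Lemma eq_big_all (T : Type) (P : T -> bool) (r : seq T) (F1 F2 : T -> CC) :
  all P r -> (forall x, P x -> F1 x = F2 x) ->
  \sum_(x <- r) F1 x = \sum_(x <- r) F2 x.
Proof.
move=> Ha H; elim: r Ha => [|x r IH] /=; first by rewrite !big_nil.
by move=> /andP [Hx Hr]; rewrite !big_cons H // IH.
Qed.

Lemma WT_tab wt : okwt wt -> forall j, ev c5 B0 wt.1 j = tab wt.2 j.
Proof.
move=> /eqP E j.
by rewrite /tab -E -tb_c5 -tb_B0 -tb_ev nth_tb inord_val.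
Qed.

Lemma S60 (c : CC) : \sum_(wt <- WT) c = 60%:R * c.
Proof. by rewrite /WT !big_cons big_nil; ring. Qed.

Lemma main_avg (f : {mpoly CC[6]}) (tau : {perm 'I_6}) :
  f \is 4.-homog ->
  (forall wt, okwt wt -> forall y, in_P4 y ->
     f.@[fun i => y (tab wt.2 (tau i))] = f.@[fun i => y (tau i)]) ->
  exists bt gm : CC, forall y, in_P4 y ->
    120%:R * f.@[fun i => y (tau i)] = bt * p2 y ^+ 2 + gm * p4 y.
Proof.
move=> Hh Hinv.
pose e (m : 'X_{1..6}) := fun j : 'I_6 => m (tau^-1%g j).
have He : forall m, m \in msupp f -> (\sum_(i < 6) e m i)%N = 4%N.
  move=> m Hm; rewrite /e.
  rewrite (reindex_inj (h := tau) (@perm_inj _ tau)) /=.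
  under eq_bigr => i _ do rewrite permK.
  by rewrite -mdegE; move/dhomogP: Hh => /(_ _ Hm).
exists (\sum_(m <- msupp f) f@_m * btab (e m (inord 0)) (e m (inord 1)) (e m (inord 2))
          (e m (inord 3)) (e m (inord 4)) (e m (inord 5))).
exists (\sum_(m <- msupp f) f@_m * gtab (e m (inord 0)) (e m (inord 1)) (e m (inord 2))
          (e m (inord 3)) (e m (inord 4)) (e m (inord 5))).
move=> y Hy.
have E1 : 60%:R * f.@[fun i => y (tau i)] =
    \sum_(m <- msupp f) f@_m * avgsum (e m) y.
  rewrite -S60; rewrite (@eq_big_all _ okwt _ _ (fun wt => f.@[fun i => y (tab wt.2 (tau i))]) WT_ok);
    last by move=> wt Hwt; rewrite Hinv.
  under eq_bigr => wt _ do rewrite mevalE.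
  rewrite exchange_big /=; apply: eq_bigr => m _.
  rewrite /avgsum mulr_sumr; apply: eq_bigr => wt _; congr (_ * _).
  symmetry; rewrite (reindex_inj (h := tau) (@perm_inj _ tau)) /=.
  by apply: eq_bigr => i _; rewrite /e permK.
have -> : 120%:R * f.@[fun i => y (tau i)] = 2%:R * (60%:R * f.@[fun i => y (tau i)]).
  by rewrite mulrA -natrM.
rewrite E1 mulr_sumr (eq_big_seq (fun m => f@_m * (2%:R * avgsum (e m) y))); last first.
  by move=> m Hm; rewrite mulrCA.
rewrite (eq_big_seq (fun m => f@_m * (btab (e m (inord 0)) (e m (inord 1)) (e m (inord 2))
          (e m (inord 3)) (e m (inord 4)) (e m (inord 5)) * p2 y ^+ 2 +
     gtab (e m (inord 0)) (e m (inord 1)) (e m (inord 2))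
          (e m (inord 3)) (e m (inord 4)) (e m (inord 5)) * p4 y))); last first.
  by move=> m Hm; rewrite avg_lemma // He.
rewrite !mulr_suml -big_split /=; apply: eq_bigr => m _.
by rewrite mulrDr !mulrA.
Qed.

Arguments inv_by_uniq {f g k1 k2 x0}.
Arguments ev_inv {f p q kq} w.
Arguments ev_intw {tau p0 q0 p q} w.

Lemma phi_ev2 (phi : {morphism [set: {perm 'I_5}] >-> {perm 'I_6}}) w :
  phi (ev2 x1 x2 w) = ev2 (phi x1) (phi x2) w.
Proof.
elim: w => //= u IHu v IHv.
by rewrite morphM ?inE // IHu IHv.
Qed.

Lemma ev2_fix (p q : {perm 'I_6}) k w : p k = k -> q k = k -> ev2 p q w k = k.
Proof.
move=> Hp Hq; elim: w => //= u IHu v IHv.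
by rewrite permM IHu IHv.
Qed.

Lemma v0_P4 : in_P4 v0.
Proof. rewrite /in_P4 sum6 /v0 !inordK //=; ring. Qed.
Lemma p2_v0 : p2 v0 = 6%:R.
Proof. rewrite /p2 sum6 /v0 !inordK //=; ring. Qed.
Lemma p4_v0 : p4 v0 = 6%:R.
Proof. rewrite /p4 sum6 /v0 !inordK //=; ring. Qed.

Theorem lemma4p11 (G : {group {perm 'I_6}}) (f : {mpoly CC[6]}) :
  G \isog [set: {perm 'I_5}] ->
  [transitive G, on [set: 'I_6] | 'P] ->
  quartic_threefold f ->
  invariant_under G f ->
  contains_Sigma10 f ->
  is_Xt (1 / 6) f.
Proof.
move=> Hiso Htr [Hhom [x0 [Hx0 Hfx0]]] Hinv Hsig.
rewrite isog_sym in Hiso; case/isogP: Hiso => phi injphi imphi.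
have phiM : forall u v, phi (u * v)%g = (phi u * phi v)%g.
  by move=> u v; rewrite morphM ?inE.
have phiX : forall u k, phi (u ^+ k)%g = (phi u ^+ k)%g.
  by move=> u k; rewrite morphX ?inE.
have phiG : forall u, phi u \in G.
  by move=> u; rewrite -imphi; apply: mem_morphim; rewrite inE.
pose a := phi x1; pose b := phi x2.
have R1 : (a ^+ 5 = 1)%g by rewrite /a -phiX S5_rel4 morph1.
have Ra : a != 1%g by rewrite /a (morph_injm_eq1 injphi) ?inE // x1_neq1.
have R2 : (b ^+ 2 = 1)%g by rewrite /b -phiX S5_rel1 morph1.
have R3 : ((a * b) ^+ 4 = 1)%g by rewrite /a /b -phiM -phiX S5_rel2 morph1.
have R4 : ((b * a ^+ 2 * b * a ^+ 3) ^+ 2 = 1)%g.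
  have := congr1 phi S5_rel3; rewrite morph1 ?(phiX, phiM).
  by [].
have NC : forall k : 'I_6, a k = k -> b k = k -> False.
  move=> k Hak Hbk.
  have Hfix : forall s : {perm 'I_5}, phi s k = k.
    move=> s; have [ts -> Hts] := prod_tpermP s.
    elim: ts Hts => [|t ts IH] /=; first by rewrite big_nil morph1 perm1.
    move=> /andP [Ht Hts]; rewrite big_cons phiM permM.
    rewrite (tperm_word _ _ Ht) phi_ev2 ev2_fix //; exact: IH.
  pose k' : 'I_6 := if k == ord0 then inord 1 else ord0.
  have Hk' : k' != k.
    rewrite /k'; case: ifP => [/eqP -> | /negbT H]; last by rewrite eq_sym.
    by apply/eqP => /(congr1 (@nat_of_ord 6)); rewrite inordK.
  have := atransP Htr k (in_setT k).
  move=> /(congr1 (fun S : {set 'I_6} => k' \in S)); rewrite inE => /orbitP [g Hg Hgk].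
  move: Hg; rewrite -imphi => /morphimP [s _ _ Hs].
  have E : phi s k = k' by rewrite -Hgk Hs.
  rewrite Hfix in E.
  by move: Hk'; rewrite E eqxx.
have [tau [Ta Tb]] := get_tau _ _ R1 Ra R2 R3 R4 NC.
have [ka Ka0 Ka] := Hinv a (phiG x1).
have [kb Kb0 Kb] := Hinv b (phiG x2).
have [ku Ku0 Ku] := Hinv (phi s5) (phiG s5).
have Kbb : kb * kb = 1.
  apply: (inv_by_uniq Hx0 Hfx0 (inv_byM Kb Kb)).
  rewrite -phiM; have -> : (x2 * x2)%g = (x2 ^+ 2)%g by rewrite expgS expg1.
  rewrite S5_rel1 morph1; exact: inv_by1.
have Ka1 : ka = 1.
  have E : (phi s5 * a = a * (a * phi s5))%g.
    by rewrite /a -!phiM S5_rel5 expgS expg1 mulgA.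
  have H1 := inv_byM Ku Ka.
  have H2 := inv_byM Ka (inv_byM Ka Ku).
  rewrite E in H1.
  have Heq := inv_by_uniq Hx0 Hfx0 H1 H2.
  have : ku * ka * (ka - 1) = 0.
    transitivity (ka * (ka * ku) - ku * ka); first ring.
    by rewrite -Heq subrr.
  move/eqP; rewrite !mulf_eq0 (negPf Ku0) (negPf Ka0) /= subr_eq0.
  by move/eqP.
rewrite Ka1 in Ka.
have Hw : forall w, inv_by f (ev a b w) 1.
  move=> w; exact: ev_inv w Ka Kb Kbb.
have Hmain : forall wt, okwt wt -> forall y, in_P4 y ->
    f.@[fun i => y (tab wt.2 (tau i))] = f.@[fun i => y (tau i)].
  move=> wt Hwt y Hy.
  have -> : f.@[fun i => y (tab wt.2 (tau i))] = f.@[permpt (ev a b wt.1) (permpt tau y)].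
    apply: meval_eq => i; rewrite /permpt -(WT_tab wt Hwt).
    by rewrite (ev_intw wt.1 Ta Tb).
  by rewrite Hw ?mul1r //; apply: inP4_permpt.
have [bt [gm Hbg]] := main_avg _ _ Hhom Hmain.
have Hx : forall x, in_P4 x -> 120%:R * f.@[x] = bt * p2 x ^+ 2 + gm * p4 x.
  move=> x Hx.
  have := Hbg (permpt tau^-1%g x) (inP4_permpt _ _ Hx).
  rewrite p2_permpt p4_permpt => <-; congr (_ * _).
  by apply: meval_eq => i; rewrite /permpt permK.
have Hv : bt * 36%:R + gm * 6%:R = 0.
  have := Hx v0 v0_P4; rewrite p2_v0 p4_v0.
  have -> : f.@[v0] = 0.
    rewrite -(Hsig 1%g); apply: meval_eq => i; by rewrite /permpt perm1.
  move=> H; have -> : (36%:R : CC) = 6%:R ^+ 2 by rewrite -natrX.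
  by rewrite -H mulr0.
have Hbt : bt = - gm / 6%:R.
  have E : bt = (bt * 36%:R + gm * 6%:R) / 36%:R - gm / 6%:R.
    by field.
  by rewrite E Hv mul0r add0r mulNr.
exists (gm / 120%:R).
- have Hgm : gm != 0.
    apply/negP => /eqP Hg.
    have := Hx x0 Hx0; rewrite Hbt Hg oppr0 !mul0r addr0 => /eqP.
    by rewrite mulf_eq0 pnatr_eq0 (negPf Hfx0).
  by rewrite mulf_eq0 invr_eq0 pnatr_eq0 orbF.
- move=> x Hx0'.
  have H120 : (120%:R : CC) != 0 by rewrite pnatr_eq0.
  have := Hx x Hx0'; rewrite Hbt => H.
  apply: (@mulfI _ 120%:R H120); rewrite H /Ft -/(p2 x) -/(p4 x).
  by field.
Qed.
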